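(* Let $q\ge 2$, $\eta\ge 1$, $u\ge 1$ and $n\ge 1$ be integers, and let $\mathcal{C}\subseteq\{0,1,\dots,q-1\}^n$ be a code consisting of $N\ge u+1$ distinct codewords. Then $\mathcal{C}$ is a $[q;Q;\eta;u]$-SQ-disjunct code if and only if no codeword is included in a set of $u$ other codewords; that is, if and only if for every $\mathbf{x}\in\mathcal{C}$ and every set $\mathcal{Z}\subseteq\mathcal{C}\setminus\{\mathbf{x}\}$ with $|\mathcal{Z}|=u$, it is not the case that $\{\mathbf{x}\}\lhd\mathcal{Z}$.
   Context: Semi-quantitative group testing with equidistant thresholds: $\eta$ is a positive integer (the threshold spacing). For $s\ge 1$ vectors $\mathbf{x}_1,\dots,\mathbf{x}_s\in\{0,\dots,q-1\}^n$, their SQ-sum (syndrome) is the vector $\mathbf{y}=\mathbf{x}_1\circledast\cdots\circledast\mathbf{x}_s$ of length $n$ with $i$-th coordinate $y_i=\left\lfloor\frac{x_{i,1}+\cdots+x_{i,s}}{\eta}\right\rfloor$ (ordinary integer addition), where $x_{i,j}$ is the $i$-th coordinate of $\mathbf{x}_j$. A set of codewords $\mathcal{X}$ with syndrome $\mathbf{y}_{\mathcal{X}}$ is included in a set of codewords $\mathcal{Z}$ with syndrome $\mathbf{y}_{\mathcal{Z}}$, written $\mathcal{X}\lhd\mathcal{Z}$, if $(\mathbf{y}_{\mathcal{X}})_i\le(\mathbf{y}_{\mathcal{Z}})_i$ for all $i=1,\dots,n$. A code $\mathcal{C}$ of length $n$ is a $[q;Q;\eta;u]$-SQ-disjunct code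 if for all $1\le s,t\le u$ and all sets $\mathcal{X}=\{\mathbf{x}_1,\dots,\mathbf{x}_s\}\subseteq\mathcal{C}$, $\mathcal{Z}=\{\mathbf{z}_1,\dots,\mathbf{z}_t\}\subseteq\mathcal{C}$ of codewords, $\mathcal{X}\lhd\mathcal{Z}$ implies $\mathcal{X}\subseteq\mathcal{Z}$. (Here $Q$ denotes the number of possible test outcomes and is assumed large enough that no outcome saturates; it plays no further role.) *)

(* Defs.v *)
From mathcomp Require Import all_boot.
Set Implicit Arguments. Unset Strict Implicit. Unset Printing Implicit Defensive.

Definition word (q n : nat) := {ffun 'I_n -> 'I_q}.

Definition syndrome (q n eta : nat) (X : {set word q n}) : 'I_n -> nat :=
  fun i => (\sum_(x in X) (x i : nat)) %/ eta.

Definition included (q n eta : nat) (X Z : {set word q n}) : Prop :=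
  forall i : 'I_n, syndrome eta X i <= syndrome eta Z i.

(* [q;Q;eta;u]-SQ-disjunct code (Q plays no role). *)
Definition SQ_disjunct (q n eta u : nat) (C : {set word q n}) : Prop :=
  forall X Z : {set word q n},
    X \subset C -> Z \subset C ->
    1 <= #|X| <= u -> 1 <= #|Z| <= u ->
    included eta X Z -> X \subset Z.

(* Main.v *)
Require Import Defs.
From mathcomp Require Import all_boot.

Lemma incl_sub (q n eta : nat) (X Y : {set word q n}) :
  X \subset Y -> included eta X Y.
Proof.
move=> XY i; rewrite /syndrome; apply: leq_div2r.
rewrite [X in _ <= X](bigID (mem X)) /=.
apply: leq_trans (leq_addr _ _).
rewrite [X in _ <= X](eq_bigl (mem X)) // => y.
case: (boolP (y \in X)) => yX /=; rewrite ?andbT ?andbF //.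
  by rewrite yX (subsetP XY y yX).
by rewrite (negbTE yX).
Qed.

Lemma extend (T : finType) (B : {set T}) k : forall d (Z : {set T}),
  k - #|Z| = d -> #|Z| <= k -> k <= #|B| -> Z \subset B ->
  exists Z' : {set T}, [/\ Z \subset Z', Z' \subset B & #|Z'| = k].
Proof.
elim=> [|d IH] Z Hd Hz Hk ZB.
  exists Z; split=> //; apply/eqP; rewrite eqn_leq Hz /=.
  by rewrite -subn_eq0 Hd.
have [y /setDP [yB yZ]] : exists y, y \in B :\: Z.
  apply/set0Pn; rewrite setD_eq0; apply/negP => BZ.
  have := leq_trans Hk (subset_leq_card BZ).
  by rewrite -subn_eq0 Hd.
have e1 : k - #|y |: Z| = d.
  by rewrite cardsU1 yZ /= add1n subnS Hd.
have e2 : #|y |: Z| <= k.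
  by rewrite cardsU1 yZ add1n -subn_gt0 Hd.
have e3 : y |: Z \subset B by rewrite subUset sub1set yB ZB.
have [Z' [h1 h2 h3]] := IH (y |: Z) e1 e2 Hk e3.
exists Z'; split=> //; apply: subset_trans h1; exact: subsetUr.
Qed.

Theorem proposition1 (q eta u n : nat) (C : {set word q n}) :
  2 <= q -> 1 <= eta -> 1 <= u -> 1 <= n -> u + 1 <= #|C| ->
  SQ_disjunct eta u C <->
  (forall (x : word q n) (Z : {set word q n}),
      x \in C -> Z \subset C :\ x -> #|Z| = u ->
      ~ included eta [set x] Z).
Proof.
move=> _ _ u1 _ uC; split.
  move=> D x Z xC ZC cZ inc.
  have := D [set x] Z; rewrite sub1set xC cards1 cZ leqnn u1 /=.
  move=> /(_ isT (subset_trans ZC (subsetDl _ _)) isT (leqnn u) inc).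
  rewrite sub1set => xZ.
  by have := subsetP ZC x xZ; rewrite !inE eqxx.
move=> H X Z XC ZC /andP[_ Xu] /andP[_ Zu] inc.
apply/subsetP => x xX; apply/negPn/negP => xZ.
have xC : x \in C := subsetP XC x xX.
have ZCx : Z \subset C :\ x.
  apply/subsetP => z zZ; rewrite !inE (subsetP ZC z zZ) andbT.
  by apply: contraNN xZ => /eqP <-.
have cCx : u <= #|C :\ x|.
  by move: uC; rewrite (cardsD1 x C) xC addn1 add1n ltnS.
have [Z' [h1 h2 h3]] := @extend _ (C :\ x) u _ Z (erefl (u - #|Z|)) Zu cCx ZCx.
apply: (H x Z' xC h2 h3) => i.
apply: (leq_trans _ (@incl_sub q n eta _ _ h1 i)).
apply: (leq_trans _ (inc i)).
by apply: incl_sub; rewrite sub1set.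
Qed.
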